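(* For $k\ge1$ and real $x$ let $F_k(x)=\sum_{\nu=1}^k \frac{\sin(\nu x)}{\nu}$, and for $x\in(0,\pi)$ let $H(x)=\sum_{k=1}^\infty F_k(x)(\cos(x))^k$. Then for every $x\in(0,\pi)$, $$H(x)=\frac{\pi/2-x}{1-\cos(x)}.$$ In particular, $H$ is completely monotonic on $(0,\pi/2]$.
   Context: A function $f:I\to\mathbb{R}$ on an interval $I\subset\mathbb{R}$ is completely monotonic if it has derivatives of all orders and $(-1)^n f^{(n)}(x)\ge 0$ for all $n=0,1,2,\dots$ and $x\in I$. *)

(* Defs.v *)
From Stdlib Require Import Reals.
From Coquelicot Require Import Coquelicot.
Open Scope R_scope.

Definition F (k : nat) (x : R) : R :=
  sum_n_m (fun nu => sin (INR nu * x) / INR nu) 1 k.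

(* H(x) = sum_{k>=1} F_k(x) cos(x)^k  (Coquelicot's total Series operator;
   convergence on (0,pi) is part of the theorem). *)
Definition H (x : R) : R :=
  Series (fun k => F (S k) x * cos x ^ (S k)).

Definition completely_monotonic (f : R -> R) (I : R -> Prop) : Prop :=
  forall (n : nat) (x : R), I x ->
    ex_derive_n f n x /\ 0 <= (-1) ^ n * Derive_n f n x.

(* Main.v *)
Require Import Defs.
From Stdlib Require Import Reals Lra Lia List.
From Coquelicot Require Import Coquelicot.
Open Scope R_scope.

Fixpoint ev (p : list R) (t : R) : R :=
  match p with nil => 0 | a :: q => a + t * ev q t end.
Fixpoint addl (p q : list R) : list R :=
  match p, q with nil, _ => q | _, nil => p | a::p', b::q' => (a+b) :: addl p' q' end.
Fixpoint dp (p : list R) : list R :=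
  match p with nil => nil | a :: q => addl q (0 :: dp q) end.
Definition mq (p : list R) : list R := map (fun a => a/2) (addl p (0::0::p)).

Lemma ev_addl p q t : ev (addl p q) t = ev p t + ev q t.
Proof. revert q; induction p as [|a p IH]; intros [|b q]; simpl; try ring.
  rewrite IH; ring. Qed.

Lemma ev_map2 p t : ev (map (fun a => a/2) p) t = ev p t / 2.
Proof. induction p as [|a p IH]; simpl; [field|rewrite IH; field]. Qed.

Lemma ev_mq p t : ev (mq p) t = ev p t * ((1 + t^2)/2).
Proof. unfold mq. rewrite ev_map2, ev_addl. simpl. field. Qed.

Lemma is_derive_ev p t : is_derive (ev p) t (ev (dp p) t).
Proof.
  induction p as [|a p IH]; simpl.
  - apply (is_derive_ext (fun _ => 0)). { intros; reflexivity. } apply (is_derive_const 0 t).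
  - apply (is_derive_ext (fun t => a + t * ev p t)). { intros; reflexivity. }
    rewrite ev_addl. simpl.
    replace (ev p t + (0 + t * ev (dp p) t)) with (0 + (1 * ev p t + t * ev (dp p) t)) by ring.
    apply (is_derive_plus (fun _ => a) (fun t => t * ev p t)).
    + apply (is_derive_const a t).
    + apply (is_derive_mult (fun t => t) (ev p)). apply (is_derive_id t). exact IH.
      intros; apply Rmult_comm.
Qed.

Definition nn (p : list R) := List.Forall (fun a => 0 <= a) p.

Lemma nn_addl p q : nn p -> nn q -> nn (addl p q).
Proof. revert q; induction p as [|a p IH]; intros [|b q] Hp Hq; simpl; auto.
  inversion Hp; inversion Hq; subst. constructor. lra. apply IH; auto. Qed.

Lemma nn_dp p : nn p -> nn (dp p).
Proof. induction p as [|a p IH]; intros Hp; simpl. constructor.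
  inversion Hp; subst. apply nn_addl. exact H2. constructor. lra. apply IH; exact H2. Qed.

Lemma nn_mq p : nn p -> nn (mq p).
Proof. intros Hp. unfold mq. assert (H: nn (addl p (0::0::p))).
  { apply nn_addl. exact Hp. constructor. lra. constructor. lra. exact Hp. }
  induction H; simpl; constructor; auto. lra. Qed.

Lemma ev_nn p t : nn p -> 0 <= t -> 0 <= ev p t.
Proof. intros Hp Ht; induction Hp; simpl. lra.
  apply Rplus_le_le_0_compat; auto. apply Rmult_le_pos; auto. Qed.
Definition W (x : R) := sin x / (1 - cos x).
Lemma cos_lt1 x : 0 < x < PI -> 0 < 1 - cos x.
Proof. intros H. pose proof (sin_gt_0 x (proj1 H) (proj2 H)). pose proof (sin2_cos2 x).
  pose proof (COS_bound x). unfold Rsqr in *. nra. Qed.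
Lemma is_derive_W x : 0 < x < PI -> is_derive W x (- ((1 + W x ^ 2) / 2)).
Proof. intros H. pose proof (cos_lt1 x H). pose proof (sin2_cos2 x). unfold Rsqr in *.
  assert (Hs : sin x ^ 2 = 1 - cos x ^ 2) by nra.
  unfold W. auto_derive. lra. field_simplify. 2: lra.
  rewrite Hs. field. split; nra. lra.
Qed.

Fixpoint Q (n:nat) : list R := match n with O => mq (1::nil) | S m => mq (dp (Q m)) end.
Definition V n x := (-1)^n * ev (Q n) (W x).

Lemma is_derive_V n x : 0<x<PI -> is_derive (V n) x (V (S n) x).
Proof.
  intros H. unfold V.
  assert (H1 : is_derive (fun y => ev (Q n) (W y)) x
     (ev (dp (Q n)) (W x) * (- ((1 + W x ^ 2) / 2)))).
  { pose proof (is_derive_comp (ev (Q n)) W x _ _ (is_derive_ev _ _) (is_derive_W x H)) as K.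
    unfold scal in K; simpl in K; unfold mult in K; simpl in K. rewrite Rmult_comm. exact K. }
  replace ((-1) ^ S n * ev (Q (S n)) (W x)) with ((-1)^n * (ev (dp (Q n)) (W x) * (- ((1 + W x ^ 2) / 2)))).
  apply (is_derive_scal (fun y => ev (Q n) (W y))). exact H1.
  change (Q (S n)) with (mq (dp (Q n))). rewrite ev_mq. change ((-1)^S n) with (-1 * (-1)^n). ring.
Qed.

Definition G n x := (PI/2 - x) * V n x - INR n * V (pred n) x.

Lemma is_derive_G n x : 0<x<PI -> is_derive (G n) x (G (S n) x).
Proof.
  intros H. unfold G.
  replace ((PI / 2 - x) * V (S n) x - INR (S n) * V (Init.Nat.pred (S n)) x) with
    ((-1 * V n x + (PI/2 - x) * V (S n) x) - INR n * V (S (pred n)) x).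
  - apply (is_derive_minus (fun x => (PI / 2 - x) * V n x) (fun x => INR n * V (pred n) x)).
    + apply (is_derive_mult (fun x => PI/2 - x) (V n)).
      * auto_derive. exact I. ring.
      * apply is_derive_V; exact H.
      * intros; apply Rmult_comm.
    + apply (is_derive_scal (V (pred n))). apply is_derive_V; exact H.
  - destruct n; simpl pred; rewrite ?S_INR; simpl INR; ring.
Qed.

Lemma loc_int x : 0<x<PI -> locally x (fun t => 0<t<PI).
Proof.
  intros H. assert (Hp : 0 < Rmin x (PI - x)) by (apply Rmin_glb_lt; lra).
  exists (mkposreal _ Hp). intros y Hy. change (Rabs (y - x) < Rmin x (PI - x)) in Hy.
  pose proof (Rmin_l x (PI - x)). pose proof (Rmin_r x (PI - x)).
  apply Rabs_def2 in Hy. lra.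
Qed.

Lemma DG n x : 0<x<PI -> ex_derive_n (G 0) n x /\ Derive_n (G 0) n x = G n x.
Proof.
  revert x; induction n as [|n IH]; intros x H.
  - split; [exact I| reflexivity].
  - assert (Hl : locally x (fun t => G n t = Derive_n (G 0) n t)).
    { eapply filter_imp. 2: apply (loc_int x H). intros t Ht. symmetry; apply IH; exact Ht. }
    split.
    + simpl. eapply ex_derive_ext_loc. exact Hl. eexists; apply is_derive_G; exact H.
    + simpl. rewrite <- (Derive_ext_loc _ _ _ Hl). apply is_derive_unique, is_derive_G; exact H.
Qed.

Lemma nn_Q n : nn (Q n).
Proof. induction n; simpl. apply nn_mq. constructor. lra. constructor.
  apply nn_mq, nn_dp, IHn. Qed.

Lemma W_pos x : 0<x<PI -> 0 <= W x.
Proof. intros H. unfold W. pose proof (sin_gt_0 x (proj1 H) (proj2 H)). pose proof (cos_lt1 x H).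
  apply Rlt_le, Rdiv_lt_0_compat; lra. Qed.

Lemma V_sign n x : 0<x<PI -> 0 <= (-1)^n * V n x.
Proof.
  intros H. unfold V. rewrite <- Rmult_assoc.
  apply Rmult_le_pos. apply Rle_0_sqr. apply ev_nn. apply nn_Q. apply W_pos; exact H.
Qed.

Lemma G_sign n x : 0 < x <= PI/2 -> 0 <= (-1)^n * G n x.
Proof.
  intros H. assert (H' : 0 < x < PI) by (pose proof PI_RGT_0; lra).
  unfold G. destruct n as [|m].
  - simpl. pose proof (V_sign 0 x H'). simpl in H0. nra.
  - replace ((-1) ^ S m * ((PI / 2 - x) * V (S m) x - INR (S m) * V (pred (S m)) x))
      with ((PI/2 - x) * ((-1)^S m * V (S m) x) + INR (S m) * ((-1)^m * V m x))
      by (simpl pred; simpl pow; ring).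
    pose proof (V_sign (S m) x H'). pose proof (V_sign m x H'). pose proof (pos_INR (S m)).
    apply Rplus_le_le_0_compat; apply Rmult_le_pos; lra.
Qed.

Definition b (x : R) (n : nat) := sin (INR n * x).

Lemma b_rec x n : b x (S (S n)) + b x n = 2 * cos x * b x (S n).
Proof.
  unfold b. replace (INR (S (S n)) * x) with (INR (S n) * x + x) by (rewrite !S_INR; ring).
  replace (INR n * x) with (INR (S n) * x - x) by (rewrite !S_INR; ring).
  rewrite sin_plus, sin_minus. ring.
Qed.

Lemma psum_id x t N :
  (1 - 2 * t * cos x + t^2) * sum_n (fun k => b x (S k) * t^k) N
  = b x 1 - t^(S N) * b x (S (S N)) + t^(S (S N)) * b x (S N).
Proof.
  induction N as [|N IH].
  - rewrite sum_O. pose proof (b_rec x 0). unfold b in H at 2. simpl INR in H.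
    rewrite Rmult_0_l, sin_0 in H. simpl. nra.
  - rewrite sum_Sn. change (plus ?a ?c) with (a + c).
    rewrite Rmult_plus_distr_l, IH. pose proof (b_rec x (S N)).
    simpl pow. nra.
Qed.

Lemma lim_bounded_geom (u : nat -> R) q : Rabs q < 1 -> (forall n, Rabs (u n) <= 1) ->
  is_lim_seq (fun n => q^n * u n) 0.
Proof.
  intros Hq Hu. apply is_lim_seq_abs_0.
  apply (is_lim_seq_le_le (fun _ => 0) _ (fun n => Rabs q ^ n)).
  - intros n. split. apply Rabs_pos. rewrite Rabs_mult, <- RPow_abs.
    pose proof (Hu n). pose proof (pow_le (Rabs q) n (Rabs_pos q)).
    pose proof (Rabs_pos (u n)). nra.
  - apply is_lim_seq_const.
  - apply is_lim_seq_geom. rewrite Rabs_Rabsolu. exact Hq.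
Qed.

Lemma b_bound x n : Rabs (b x n) <= 1.
Proof. unfold b. apply Rabs_le. pose proof (SIN_bound (INR n * x)). lra. Qed.

Lemma D_pos x t : 0 < sin x -> 0 < 1 - 2 * t * cos x + t^2.
Proof. intros H. pose proof (sin2_cos2 x). unfold Rsqr in *.
  replace (1 - 2 * t * cos x + t^2) with ((t - cos x)^2 + sin x * sin x) by (rewrite <- H0; ring).
  pose proof (pow2_ge_0 (t - cos x)). nra. Qed.

Lemma deriv_series x t : 0 < sin x -> Rabs t < 1 ->
  is_series (fun k => b x (S k) * t^k) (sin x / (1 - 2 * t * cos x + t^2)).
Proof.
  intros Hs Ht. pose proof (D_pos x t Hs) as HD.
  assert (L : is_lim_seq (fun N => sum_n (fun k => b x (S k) * t^k) N) (sin x / (1 - 2 * t * cos x + t^2))).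
  { apply is_lim_seq_ext with
      (fun N => (b x 1 - t * (t^N * b x (S (S N))) + t^2 * (t^N * b x (S N))) / (1 - 2 * t * cos x + t^2)).
    { intros N. pose proof (psum_id x t N) as E. simpl pow in E |- *.
      apply Rmult_eq_reg_l with (1 - 2 * t * cos x + t * (t * 1)). 2: simpl in HD; lra.
      rewrite E. field. simpl in HD; lra. }
    replace (sin x / (1 - 2 * t * cos x + t ^ 2)) with ((b x 1 - t * 0 + t^2 * 0) / (1 - 2 * t * cos x + t ^ 2)).
    2: { unfold b. simpl INR. rewrite Rmult_1_l. field. lra. }
    apply is_lim_seq_div'. 3: lra. 2: apply is_lim_seq_const.
    apply is_lim_seq_plus'. apply is_lim_seq_minus'. apply is_lim_seq_const.
    apply is_lim_seq_mult'. apply is_lim_seq_const.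
    apply lim_bounded_geom; auto. intros; apply b_bound.
    apply is_lim_seq_mult'. apply is_lim_seq_const.
    apply lim_bounded_geom; auto. intros; apply b_bound. }
  exact L.
Qed.

Definition a (x : R) (n : nat) := sin (INR n * x) / INR n.

Lemma a_bound x n : Rabs (a x n) <= 1.
Proof.
  unfold a. destruct n as [|n].
  - simpl. unfold Rdiv. rewrite Rmult_0_l, sin_0, Rmult_0_l, Rabs_R0. lra.
  - pose proof (b_bound x (S n)) as Hb. unfold b in Hb.
    assert (HS : 1 <= INR (S n)) by (rewrite S_INR; pose proof (pos_INR n); lra).
    unfold Rdiv. rewrite Rabs_mult, Rabs_inv, (Rabs_right (INR (S n))) by lra.
    apply Rle_trans with (Rabs (sin (INR (S n) * x)) * 1).
    apply Rmult_le_compat_l. apply Rabs_pos.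
    rewrite <- Rinv_1. apply Rinv_le_contravar; lra. lra.
Qed.

Lemma a0 x : a x 0 = 0.
Proof. unfold a. simpl. unfold Rdiv. rewrite Rmult_0_l, sin_0. ring. Qed.

Lemma rad (c : nat -> R) : (forall n, Rabs (c n) <= 1) -> forall t, Rabs t < 1 -> Rbar_lt (Rabs t) (CV_radius c).
Proof.
  intros Hc t Ht. apply Rbar_lt_le_trans with (Finite 1). exact Ht.
  apply (proj1 (CV_radius_bounded c)). exists 1. intros n. rewrite pow1, Rmult_1_r. apply Hc.
Qed.

Lemma PS_derive_a x n : PS_derive (a x) n = b x (S n).
Proof. unfold PS_derive, a, b. field. apply not_0_INR. lia. Qed.

Lemma phi_deriv x t : 0 < sin x -> Rabs t < 1 ->
  is_derive (PSeries (a x)) t (sin x / (1 - 2 * t * cos x + t^2)).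
Proof.
  intros Hs Ht. replace (sin x / (1 - 2 * t * cos x + t^2)) with (PSeries (PS_derive (a x)) t).
  apply is_derive_PSeries. apply rad. apply a_bound. exact Ht.
  unfold PSeries. rewrite (Series_ext _ (fun k => b x (S k) * t^k)).
  apply is_series_unique, deriv_series; auto.
  intros n; rewrite PS_derive_a; reflexivity.
Qed.

Definition psi x t := atan ((t - cos x) / sin x) + atan (cos x / sin x).

Lemma psi_deriv x t : 0 < sin x -> is_derive (psi x) t (sin x / (1 - 2 * t * cos x + t^2)).
Proof.
  intros Hs. pose proof (D_pos x t Hs) as HD. pose proof (sin2_cos2 x). unfold Rsqr in *.
  unfold psi.
  assert (Ha : forall y, is_derive atan y (/ (1 + y^2))).
  { intros y. apply is_derive_Reals, derivable_pt_lim_atan. }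
  pose proof (is_derive_comp atan (fun t => (t - cos x) / sin x) t (/ (1 + ((t - cos x) / sin x)^2)) (/ sin x) (Ha ((t - cos x) / sin x))) as K.
  assert (K2 : is_derive (fun t => (t - cos x) / sin x) t (/ sin x)).
  { auto_derive. lra. field. lra. }
  specialize (K K2).
  replace (sin x / (1 - 2 * t * cos x + t^2)) with (plus (scal (/ sin x) (/ (1 + ((t - cos x) / sin x) ^ 2))) 0).
  apply (is_derive_plus (fun t => atan ((t - cos x) / sin x)) (fun _ => atan (cos x / sin x))).
  exact K. apply (is_derive_const (atan (cos x / sin x)) t).
  unfold plus, scal; simpl; unfold mult; simpl.
  replace (1 - 2 * t * cos x + t * (t * 1)) with ((t - cos x) * (t - cos x) + sin x * sin x) by nra.
  assert (E : 1 + (t - cos x) / sin x * ((t - cos x) / sin x * 1) = ((t - cos x) * (t - cos x) + sin x * sin x) / (sin x * sin x)) by (field; lra).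
  rewrite E. pose proof (Rle_0_sqr (t - cos x)). unfold Rsqr in *.
  field. split. lra. nra.
Qed.

Lemma cos_abs_lt1 x : 0 < sin x -> Rabs (cos x) < 1.
Proof. intros Hs. pose proof (sin2_cos2 x). unfold Rsqr in *. apply Rabs_def1; nra. Qed.

Lemma phi_value x : 0 < x < PI -> PSeries (a x) (cos x) = PI/2 - x.
Proof.
  intros Hx. pose proof (sin_gt_0 x (proj1 Hx) (proj2 Hx)) as Hs.
  pose proof (cos_abs_lt1 x Hs) as Hc.
  set (df := fun t => sin x / (1 - 2 * t * cos x + t^2)).
  assert (Hin : forall t, Rmin 0 (cos x) <= t <= Rmax 0 (cos x) -> Rabs t < 1).
  { intros t Ht. apply Rabs_def2 in Hc. apply Rabs_def1.
    - pose proof (Rmax_lub_lt 0 (cos x) 1 ltac:(lra) ltac:(lra)). lra.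
    - pose proof (Rmin_glb_lt 0 (cos x) (-1) ltac:(lra) ltac:(lra)). lra. }
  assert (Hcont : forall t, Rmin 0 (cos x) <= t <= Rmax 0 (cos x) -> continuous df t).
  { intros t _. apply (@ex_derive_continuous R_AbsRing R_NormedModule df t). unfold df. auto_derive.
    pose proof (D_pos x t Hs). lra. }
  assert (I1 := is_RInt_derive (PSeries (a x)) df 0 (cos x)
           (fun t Ht => phi_deriv x t Hs (Hin t Ht)) Hcont).
  assert (I2 := is_RInt_derive (psi x) df 0 (cos x)
           (fun t _ => psi_deriv x t Hs) Hcont).
  pose proof (is_RInt_unique _ _ _ _ I1) as E1.
  pose proof (is_RInt_unique _ _ _ _ I2) as E2.
  rewrite E1 in E2. unfold minus, plus, opp in E2; simpl in E2.
  rewrite PSeries_0, a0 in E2. unfold psi in E2.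
  replace (cos x - cos x) with 0 in E2 by ring.
  replace (0 - cos x) with (- cos x) in E2 by ring.
  unfold Rdiv in E2. rewrite Rmult_0_l, atan_0, <- Ropp_mult_distr_l, atan_opp in E2.
  assert (Ht : cos x * / sin x = tan (PI/2 - x)).
  { unfold tan. rewrite sin_shift, cos_shift. reflexivity. }
  rewrite Ht, atan_tan in E2. lra. lra.
Qed.

Lemma F_step x N : F (S (S N)) x = F (S N) x + a x (S (S N)).
Proof. unfold F. rewrite sum_n_Sm. reflexivity. lia. Qed.

Lemma F_1 x : F 1 x = a x 1.
Proof. unfold F. rewrite sum_n_n. reflexivity. Qed.

Lemma F_bound x N : Rabs (F (S N) x) <= INR (S N).
Proof.
  induction N as [|N IH].
  - rewrite F_1. simpl INR. apply a_bound.
  - rewrite F_step, (S_INR (S N)). eapply Rle_trans. apply Rabs_triang.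
    pose proof (a_bound x (S (S N))). lra.
Qed.

Lemma M_id x N : (1 - cos x) * sum_n (fun k => F (S k) x * cos x ^ (S k)) N
  = sum_n (fun k => a x k * cos x ^ k) (S N) - cos x ^ (S (S N)) * F (S N) x.
Proof.
  induction N as [|N IH].
  - rewrite sum_O, sum_Sn, sum_O, F_1, a0. change (plus ?u ?v) with (u + v). simpl. ring.
  - rewrite sum_Sn, (sum_Sn _ (S N)). change (plus ?u ?v) with (u + v).
    rewrite Rmult_plus_distr_l, IH, F_step. simpl pow. ring.
Qed.

Lemma nc_lim q : Rabs q < 1 -> is_lim_seq (fun n => INR (S n) * Rabs q ^ n) 0.
Proof.
  intros Hq. set (ones := fun _ : nat => 1).
  assert (Hr : Rbar_lt (Rabs (Rabs q)) (CV_radius (PS_derive ones))).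
  { rewrite CV_radius_derive. apply rad. intros; unfold ones; rewrite Rabs_R1; lra.
    rewrite Rabs_Rabsolu; exact Hq. }
  pose proof (ex_series_lim_0 _ (CV_disk_inside _ _ Hr)) as L.
  eapply is_lim_seq_ext. 2: exact L. intros n. simpl.
  unfold PS_derive, ones. rewrite Rmult_1_r, Rabs_mult, <- RPow_abs, Rabs_Rabsolu.
  rewrite Rabs_right. reflexivity. apply Rle_ge, pos_INR.
Qed.

Lemma part1 x : 0 < x < PI ->
  is_series (fun k => F (S k) x * cos x ^ (S k)) ((PI / 2 - x) / (1 - cos x)).
Proof.
  intros Hx. pose proof (sin_gt_0 x (proj1 Hx) (proj2 Hx)) as Hs.
  pose proof (cos_abs_lt1 x Hs) as Hc.
  assert (H1c : 0 < 1 - cos x) by (apply Rabs_def2 in Hc; lra).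
  assert (HA : is_lim_seq (fun N => sum_n (fun k => a x k * cos x ^ k) (S N)) (PI/2 - x)).
  { rewrite <- phi_value by exact Hx. apply (is_lim_seq_incr_1 (sum_n (fun k => a x k * cos x ^ k))).
    apply Series_correct. apply ex_series_Rabs. apply CV_disk_inside. apply rad. apply a_bound. exact Hc. }
  assert (HE : is_lim_seq (fun N => cos x ^ (S (S N)) * F (S N) x) 0).
  { apply is_lim_seq_abs_0.
    apply (is_lim_seq_le_le (fun _ => 0) _ (fun n => INR (S n) * Rabs (cos x) ^ n)).
    - intros n. split. apply Rabs_pos. rewrite Rabs_mult, <- RPow_abs.
      pose proof (F_bound x n). pose proof (pow_le (Rabs (cos x)) n (Rabs_pos _)).
      pose proof (Rabs_pos (cos x)). pose proof (Rabs_pos (F (S n) x)).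
      assert (Rabs (cos x) ^ S (S n) <= Rabs (cos x) ^ n).
      { simpl. assert (Rabs (cos x) * Rabs (cos x) <= 1) by nra.
        rewrite <- Rmult_assoc. pose proof (Rmult_le_pos _ _ (Rabs_pos (cos x)) (Rabs_pos (cos x))).
        nra. }
      pose proof (pow_le (Rabs (cos x)) (S (S n)) (Rabs_pos _)). nra.
    - apply is_lim_seq_const.
    - apply nc_lim. exact Hc. }
  assert (L : is_lim_seq (sum_n (fun k => F (S k) x * cos x ^ (S k))) ((PI / 2 - x) / (1 - cos x))).
  { eapply is_lim_seq_ext.
    2: { replace ((PI / 2 - x) / (1 - cos x)) with (((PI/2 - x) - 0) / (1 - cos x)) by (f_equal; ring).
         apply is_lim_seq_div'. apply is_lim_seq_minus'. exact HA. exact HE.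
         apply is_lim_seq_const. lra. }
    intros N. cbv beta. rewrite <- M_id. field. lra. }
  exact L.
Qed.

Lemma G0_eq t : 0 < t < PI -> G 0 t = (PI/2 - t) / (1 - cos t).
Proof.
  intros Ht. pose proof (cos_lt1 t Ht). pose proof (sin2_cos2 t). unfold Rsqr in *.
  unfold G, V. simpl pow. simpl Q. rewrite ev_mq. simpl ev. unfold W.
  simpl INR. field_simplify. 2: lra.
  replace (sin t ^ 2) with (1 - cos t ^ 2) by nra. field. split; nra. lra.
Qed.

Theorem corollary2 :
  (forall x : R, 0 < x < PI ->
     is_series (fun k => F (S k) x * cos x ^ (S k))
               ((PI / 2 - x) / (1 - cos x))) /\
  (forall x : R, 0 < x < PI -> H x = (PI / 2 - x) / (1 - cos x)) /\
  completely_monotonic H (fun x => 0 < x <= PI / 2).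
Proof.
  assert (P2 : forall x : R, 0 < x < PI -> H x = (PI / 2 - x) / (1 - cos x)).
  { intros x Hx. unfold H. apply is_series_unique, part1; exact Hx. }
  split. exact part1. split. exact P2.
  intros n x Hx. assert (Hx' : 0 < x < PI) by (pose proof PI_RGT_0; lra).
  assert (Hl : locally x (fun t => G 0 t = H t)).
  { eapply filter_imp. 2: apply (loc_int x Hx'). intros t Ht. rewrite G0_eq, P2; auto. }
  destruct (DG n x Hx') as [E1 E2]. split.
  - exact (ex_derive_n_ext_loc (G 0) H n x Hl E1).
  - rewrite <- (Derive_n_ext_loc _ _ n x Hl), E2. apply G_sign. exact Hx.
Qed.
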